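(* Let $(x_j)_{j=1}^N$ and $(f_j)_{j=1}^N$ be frames for $\ell_2^M$ with $\|x_j\|=\|f_j\|$ for all $1\leq j\leq N$. Let $A>0$ be a lower frame bound for either $(x_j)_{j=1}^N$ or $(f_j)_{j=1}^N$. Then for all non-zero scalars $(d_j)_{j=1}^N$, if $B$ is a Bessel bound for both $(d_jx_j)_{j=1}^N$ and $(d_j^{-1}f_j)_{j=1}^N$, then $B\geq A$. In particular, if $(x_j)_{j=1}^N$ and $(f_j)_{j=1}^N$ are both tight frames, then they are both tight with the same frame bound $A>0$, and $$A=\min_{d=(d_j)_{j=1}^N}\max\{B_{dX},B_{d^{-1}F}\},$$ where the minimum is over sequences of non-zero scalars, $B_{dX}$ is the optimal Bessel bound of $(d_jx_j)_{j=1}^N$ and $B_{d^{-1}F}$ is the optimal Bessel bound of $(d_j^{-1}f_j)_{j=1}^N$.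
   Context: A sequence $(y_j)_{j=1}^N$ in $\ell_2^M$ has Bessel bound $B$ if $\sum_j|\langle x,y_j\rangle|^2\leq B\|x\|^2$ for all $x$ (the optimal Bessel bound is the least such $B$); it is a frame with lower frame bound $A>0$ if moreover $A\|x\|^2\leq\sum_j|\langle x,y_j\rangle|^2$ for all $x$; it is tight with frame bound $A$ if $\sum_j|\langle x,y_j\rangle|^2=A\|x\|^2$ for all $x$. *)

(* Defs.v *)
(* Scalars: an arbitrary numClosedFieldType C (e.g. algC or
   the complex numbers); l_2^M is represented by row vectors 'rV[C]_M with the
   standard inner product <x,y> = \sum_i x_i * conj(y_i). *)
From HB Require Import structures.
From mathcomp Require Import all_boot all_order all_algebra.
Set Implicit Arguments. Unset Strict Implicit. Unset Printing Implicit Defensive.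
Import Order.TTheory GRing.Theory Num.Theory.
Local Open Scope ring_scope.

Section FrameDefs.
Variable C : numClosedFieldType.

Definition dotp (M : nat) (x y : 'rV[C]_M) : C := \sum_(i < M) x 0 i * (y 0 i)^*.

Definition vnorm (M : nat) (x : 'rV[C]_M) : C := sqrtC (\sum_(i < M) `|x 0 i| ^+ 2).

Definition frame_sum (M N : nat) (y : 'I_N -> 'rV[C]_M) (x : 'rV[C]_M) : C :=
  \sum_(j < N) `|dotp x (y j)| ^+ 2.

Definition bessel_bound (M N : nat) (y : 'I_N -> 'rV[C]_M) (B : C) : Prop :=
  forall x : 'rV[C]_M, frame_sum y x <= B * vnorm x ^+ 2.

Definition optimal_bessel_bound (M N : nat) (y : 'I_N -> 'rV[C]_M) (B : C) : Prop :=
  bessel_bound y B /\ forall B', bessel_bound y B' -> B <= B'.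

Definition lower_frame_bound (M N : nat) (y : 'I_N -> 'rV[C]_M) (A : C) : Prop :=
  0 < A /\ forall x : 'rV[C]_M, A * vnorm x ^+ 2 <= frame_sum y x.

Definition is_frame (M N : nat) (y : 'I_N -> 'rV[C]_M) : Prop :=
  exists A B, lower_frame_bound y A /\ bessel_bound y B.

Definition tight_frame (M N : nat) (y : 'I_N -> 'rV[C]_M) (A : C) : Prop :=
  0 < A /\ forall x : 'rV[C]_M, frame_sum y x = A * vnorm x ^+ 2.

Definition scale_seq (M N : nat) (d : 'I_N -> C) (y : 'I_N -> 'rV[C]_M) : 'I_N -> 'rV[C]_M :=
  fun j => d j *: y j.

Definition invscale_seq (M N : nat) (d : 'I_N -> C) (y : 'I_N -> 'rV[C]_M) : 'I_N -> 'rV[C]_M :=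
  fun j => (d j)^-1 *: y j.

End FrameDefs.

(* Main.v *)
Require Import Defs.
From HB Require Import structures.
From mathcomp Require Import all_boot all_order all_algebra.
Import Order.TTheory GRing.Theory Num.Theory.
Local Open Scope ring_scope.
From mathcomp Require Import ring lra.

Set Implicit Arguments.
Section H.
Variable C : numClosedFieldType.
Variables M N : nat.
Implicit Types y : 'I_N -> 'rV[C]_M.

Lemma vnorm2 (x : 'rV[C]_M) : vnorm x ^+ 2 = \sum_i `|x 0 i| ^+ 2.
Proof. by rewrite /vnorm sqrtCK. Qed.

Lemma vnorm2_ge0 (x : 'rV[C]_M) : 0 <= vnorm x ^+ 2.
Proof. by rewrite vnorm2 sumr_ge0 // => i _; rewrite exprn_ge0. Qed.

Lemma dotp_e i (z : 'rV[C]_M) : dotp (delta_mx 0 i) z = (z 0 i)^*.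
Proof.
rewrite /dotp (bigD1 i) //= mxE !eqxx mul1r big1 ?addr0 // => k /negbTE nk.
by rewrite mxE nk andbF mul0r.
Qed.

Lemma vnorm_e i : vnorm (delta_mx 0 i : 'rV[C]_M) ^+ 2 = 1.
Proof.
rewrite vnorm2 (bigD1 i) //= mxE !eqxx normr1 expr1n big1 ?addr0 // => k /negbTE nk.
by rewrite mxE nk andbF normr0 expr0n.
Qed.

Definition S y := \sum_(i < M) frame_sum y (delta_mx 0 i).

Lemma S_eq y : S y = \sum_j vnorm (y j) ^+ 2.
Proof.
rewrite /S /frame_sum exchange_big /=; apply: eq_bigr => j _.
by rewrite vnorm2; apply: eq_bigr => i _; rewrite dotp_e norm_conjC.
Qed.

Lemma sum_const_M (a : C) : \sum_(i < M) a = a * M%:R.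
Proof. by rewrite sumr_const card_ord mulr_natr. Qed.

Lemma bessel_S y B : bessel_bound y B -> S y <= B * M%:R.
Proof.
move=> hB; rewrite /S -sum_const_M; apply: ler_sum => i _.
by have := hB (delta_mx 0 i); rewrite vnorm_e mulr1.
Qed.

Lemma lower_S y A : lower_frame_bound y A -> A * M%:R <= S y.
Proof.
move=> [_ hA]; rewrite /S -sum_const_M; apply: ler_sum => i _.
by have := hA (delta_mx 0 i); rewrite vnorm_e mulr1.
Qed.

Lemma tight_S y A : tight_frame y A -> S y = A * M%:R.
Proof.
move=> [_ hA]; rewrite /S -sum_const_M; apply: eq_bigr => i _.
by rewrite hA vnorm_e mulr1.
Qed.

Lemma vnorm_scale (a : C) (x : 'rV[C]_M) : vnorm (a *: x) ^+ 2 = `|a| ^+ 2 * vnorm x ^+ 2.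
Proof.
rewrite !vnorm2 mulr_sumr; apply: eq_bigr => i _.
by rewrite mxE normrM exprMn.
Qed.

Lemma am_gm (a v : C) : 0 < a -> 0 <= v -> 2 * v <= a * v + a^-1 * v.
Proof.
move=> a0 v0; rewrite -subr_ge0.
have -> : a * v + a^-1 * v - 2 * v = ((a - 1) ^+ 2 / a) * v.
  by field; rewrite gt_eqF.
apply: mulr_ge0 => //; apply: divr_ge0; last exact: ltW.
rewrite -realEsqr; apply: rpredB; [exact: gtr0_real | exact: real1].
Qed.

Lemma key (X F : 'I_N -> 'rV[C]_M) (d : 'I_N -> C) (B1 B2 : C) :
  (forall j, vnorm (X j) = vnorm (F j)) -> (forall j, d j != 0) ->
  bessel_bound (scale_seq d X) B1 -> bessel_bound (invscale_seq d F) B2 ->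
  2 * S X <= (B1 + B2) * M%:R.
Proof.
move=> hn hd h1 h2.
have := bessel_S h1; have := bessel_S h2; rewrite !S_eq => e2 e1.
rewrite [(B1 + B2) * _]mulrDl; apply: le_trans (lerD e1 e2); idtac.
rewrite mulr_sumr -big_split /=; apply: ler_sum => j _.
rewrite /scale_seq /invscale_seq !vnorm_scale -hn normfV exprVn.
apply: am_gm; last exact: vnorm2_ge0.
by rewrite exprn_gt0 // normr_gt0.
Qed.

Lemma frame_sum_ge0 y x : 0 <= frame_sum y x.
Proof. by apply: sumr_ge0 => j _; rewrite exprn_ge0. Qed.

Lemma bessel_mono y B B' : bessel_bound y B -> B <= B' -> bessel_bound y B'.
Proof.
move=> hB le x; apply: le_trans (hB x) _.
by apply: ler_wpM2r => //; exact: vnorm2_ge0.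
Qed.

Lemma bessel_ge0 y B : (0 < M)%N -> bessel_bound y B -> 0 <= B.
Proof.
move=> M0 hB; have := hB (delta_mx 0 (Ordinal M0)); rewrite vnorm_e mulr1.
exact: le_trans (frame_sum_ge0 _ _).
Qed.

Lemma tight_opt y A : (0 < M)%N -> tight_frame y A -> optimal_bessel_bound y A.
Proof.
move=> M0 [A0 hA]; split; first by move=> x; rewrite hA.
move=> B' hB; have := hB (delta_mx 0 (Ordinal M0)).
by rewrite hA vnorm_e !mulr1.
Qed.

Lemma tight_lower y A : tight_frame y A -> lower_frame_bound y A.
Proof. by move=> [A0 hA]; split => // x; rewrite hA. Qed.

Lemma tight_scale1 y A : tight_frame y A -> tight_frame (scale_seq (fun=> 1) y) A.
Proof.
move=> [A0 hA]; split => // x; rewrite -hA /frame_sum.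
by apply: eq_bigr => j _; rewrite /scale_seq scale1r.
Qed.

Lemma tight_iscale1 y A : tight_frame y A -> tight_frame (invscale_seq (fun=> 1) y) A.
Proof.
move=> [A0 hA]; split => // x; rewrite -hA /frame_sum.
by apply: eq_bigr => j _; rewrite /invscale_seq invr1 scale1r.
Qed.

Lemma part1 (X F : 'I_N -> 'rV[C]_M) : (0 < M)%N ->
  (forall j, vnorm (X j) = vnorm (F j)) ->
  (forall (A : C) (d : 'I_N -> C) (B : C),
      (lower_frame_bound X A \/ lower_frame_bound F A) ->
      (forall j, d j != 0) ->
      bessel_bound (scale_seq d X) B ->
      bessel_bound (invscale_seq d F) B ->
      A <= B).
Proof.
move=> M0 hn A d B hA hd h1 h2.
have k := key hn hd h1 h2.
have SXF : S X = S F by rewrite !S_eq; apply: eq_bigr => j _; rewrite hn.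
have lA : A * M%:R <= S X by case: hA => hA; [exact: lower_S | rewrite SXF; exact: lower_S].
rewrite -(ler_pM2r (x := M%:R)) ?ltr0n //.
rewrite -(ler_pM2l (x := 2)) ?ltr0n //.
have h : 2 * (A * M%:R) <= 2 * S X by rewrite ler_pM2l ?ltr0n.
apply: (le_trans h); apply: (le_trans k).
have -> : (B + B) * M%:R = 2 * (B * M%:R) by ring.
by [].
Qed.
End H.
Unset Implicit Arguments.


Theorem proposition4p2 (C : numClosedFieldType) (M N : nat)
    (X F : 'I_N -> 'rV[C]_M) :
  (0 < M)%N ->
  is_frame X -> is_frame F ->
  (forall j, vnorm (X j) = vnorm (F j)) ->
  (forall (A : C) (d : 'I_N -> C) (B : C),
      (lower_frame_bound X A \/ lower_frame_bound F A) ->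
      (forall j, d j != 0) ->
      bessel_bound (scale_seq d X) B ->
      bessel_bound (invscale_seq d F) B ->
      A <= B)
  /\
  ((exists AX, tight_frame X AX) -> (exists AF, tight_frame F AF) ->
   exists A : C,
     0 < A /\ tight_frame X A /\ tight_frame F A /\
     (* A is attained by max{B_dX, B_{d^-1}F} for some nonzero d ... *)
     (exists (d : 'I_N -> C) (BX BF : C),
         (forall j, d j != 0) /\
         optimal_bessel_bound (scale_seq d X) BX /\
         optimal_bessel_bound (invscale_seq d F) BF /\
         Num.max BX BF = A) /\
     (* ... and is a lower bound for all such values *)
     (forall (d : 'I_N -> C) (BX BF : C),
         (forall j, d j != 0) ->
         optimal_bessel_bound (scale_seq d X) BX ->
         optimal_bessel_bound (invscale_seq d F) BF ->
         A <= Num.max BX BF)).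
Proof.
move=> M0 fX fF hn; have p1 := part1 M0 hn; split => //.
move=> [AX hX] [AF hF].
have SXF : @S _ _ _ X = @S _ _ _ F by rewrite !S_eq; apply: eq_bigr => j _; rewrite hn.
have eA : AX = AF.
  apply: (mulIf (x := M%:R)); first by rewrite pnatr_eq0 -lt0n.
  by rewrite -(tight_S hX) -(tight_S hF).
subst AF; exists AX; split; first by case: hX.
split => //; split => //; split.
  exists (fun=> 1), AX, AX; split; first by move=> j; exact: oner_neq0.
  split; first exact: tight_opt M0 (tight_scale1 hX).
  split; first exact: tight_opt M0 (tight_iscale1 hF).
  exact: maxxx.
move=> d BX BF hd [hBX _] [hBF _].
have rX : BX \is Num.real by apply: ger0_real; exact: bessel_ge0 M0 hBX.
have rF : BF \is Num.real by apply: ger0_real; exact: bessel_ge0 M0 hBF.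
have [le1 le2] : BX <= Num.max BX BF /\ BF <= Num.max BX BF.
  by case: (real_leP rX rF) => h; split => //; apply: ltW.
apply: (p1 _ d) => //; first by left; exact: tight_lower.
  exact: bessel_mono hBX le1.
exact: bessel_mono hBF le2.
Qed.
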